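(* Let $L$ be a finite-dimensional Lie algebra over an algebraically closed field $F$ of any characteristic. Then $L$ has a maximal subalgebra $M$ that is abelian if and only if either (i) $L$ has an abelian ideal of codimension one in $L$; or (ii) $L^{(1)}$ has dimension one and $\phi(L)=0$. In either case, $L$ is completely solvable.
   Context: $L^{(1)}=[L,L]$. $L$ is completely solvable if $L^{(1)}$ is nilpotent. $\phi(L)$ is the Frattini ideal: the largest ideal of $L$ contained in the intersection of all maximal subalgebras of $L$. *)

(* Defs.v *)
From HB Require Import structures.
From mathcomp Require Import all_boot all_order all_algebra all_field.
Set Implicit Arguments. Unset Strict Implicit. Unset Printing Implicit Defensive.
Import GRing.Theory.
Local Open Scope ring_scope.

(* A finite-dimensional Lie algebra over F: a vectType L (finite dimensional
   by construction) with a bracket br that is bilinear, alternating and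
   satisfies the Jacobi identity. *)
Definition lie_bracket (F : fieldType) (L : vectType F) (br : L -> L -> L) :=
  [/\ (forall (a : F) (x y z : L), br (a *: x + y) z = a *: br x z + br y z),
      (forall (a : F) (x y z : L), br z (a *: x + y) = a *: br z x + br z y),
      (forall x : L, br x x = 0) &
      (forall x y z : L, br x (br y z) + br y (br z x) + br z (br x y) = 0)].

Section Lie.
Variables (F : fieldType) (L : vectType F) (br : L -> L -> L).

(* [U, V] : the subspace spanned by all brackets [u, v], u in U, v in V
   (by bilinearity, spanned by the brackets of basis vectors). *)
Definition brspace (U V : {vspace L}) : {vspace L} :=
  <<[seq br u v | u <- vbasis U, v <- vbasis V]>>%VS.

Definition subalgebra (U : {vspace L}) :=
  forall x y, x \in U -> y \in U -> br x y \in U.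

Definition ideal (I : {vspace L}) :=
  forall x y, x \in I -> br y x \in I.

Definition abelian_sub (U : {vspace L}) :=
  forall x y, x \in U -> y \in U -> br x y = 0.

Definition maximal_subalgebra (M : {vspace L}) :=
  [/\ subalgebra M, M != fullv%VS &
      forall S, subalgebra S -> (M <= S)%VS -> S = M \/ S = fullv%VS].

Definition derived : {vspace L} := brspace fullv%VS fullv%VS.

Fixpoint lcs (K : {vspace L}) (n : nat) : {vspace L} :=
  if n is m.+1 then brspace K (lcs K m) else K.

Definition nilpotent_sub (K : {vspace L}) := exists n, lcs K n = 0%VS.

Definition completely_solvable := nilpotent_sub derived.

Definition frattini_ideal (Phi : {vspace L}) :=
  [/\ ideal Phi,
      (forall M, maximal_subalgebra M -> (Phi <= M)%VS) &
      (forall I, ideal I -> (forall M, maximal_subalgebra M -> (I <= M)%VS) ->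
         (I <= Phi)%VS)].

End Lie.

(* Main.v *)
Require Import Defs.
From HB Require Import structures.
From mathcomp Require Import all_boot all_order all_algebra all_field.
Set Implicit Arguments. Unset Strict Implicit. Unset Printing Implicit Defensive.
Import GRing.Theory.
Local Open Scope ring_scope.
Import passmx.
From Stdlib Require Import Classical.

Lemma eigenvalue_closedF {C : closedFieldType} n (A : 'M[C]_n) : (n > 0)%N ->
  exists a, eigenvalue A a.
Proof.
move=> n_gt0; have /closed_rootP [a rAa] : size (char_poly A) != 1%N.
  by rewrite size_char_poly; case: (n) n_gt0.
by exists a; rewrite eigenvalue_root_char.
Qed.

Lemma closed_eig (F : closedFieldType) (V : vectType F) (phi : 'End(V)) :
  (0 < \dim {:V})%N -> exists a, leigenvalue phi a.
Proof.
move=> h; have [a ha] := eigenvalue_closedF (mxof (vbasis fullv) (vbasis fullv) phi) h.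
exists a; rewrite /leigenvalue (leigenspaceE (vbasisP fullv)) vsof_eq0 //; exact: vbasisP.
Qed.

Lemma stable_eigvec (F : closedFieldType) (L : vectType F) (f : {linear L -> L})
  (W : {vspace L}) : W != 0%VS -> (forall w, w \in W -> f w \in W) ->
  exists a w, [/\ w \in W, w != 0 & f w = a *: w].
Proof.
move=> W0 fW.
pose g : 'End(subvs_of W) := linfun (vsproj W \o f \o vsval).
have : (0 < \dim {:subvs_of W})%N.
  by rewrite dimvf; change (0 < \dim W)%N; rewrite lt0n dimv_eq0.
move=> /(closed_eig g) [a]; rewrite /leigenvalue -vpick0 => hu.
have := memv_pick (leigenspace g a); set u := vpick _ => /=.
rewrite memv_ker !lfun_simp /= subr_eq0 => /eqP gu.
exists a, (vsval u); split; first exact: subvsP.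
  apply: contra hu => /eqP h; apply/eqP/subvs_inj; rewrite h; exact: (linear0 vsval).
by rewrite -[f _](vsprojK (fW _ (subvsP u))) gu linearZ.
Qed.
Section Basic.
Variables (F : closedFieldType) (L : vectType F) (br : L -> L -> L) (hL : lie_bracket br).

Lemma brDl x y z : br (x + y) z = br x z + br y z.
Proof. by have := hL; rewrite /lie_bracket; case => h _ _ _; rewrite -[x]scale1r h !scale1r. Qed.
Lemma brDr x y z : br z (x + y) = br z x + br z y.
Proof. by have := hL; rewrite /lie_bracket; case => _ h _ _; rewrite -[x]scale1r h !scale1r. Qed.
Lemma br0l z : br 0 z = 0.
Proof. by apply: (addrI (br 0 z)); rewrite -brDl !addr0. Qed.
Lemma br0r z : br z 0 = 0.
Proof. by apply: (addrI (br z 0)); rewrite -brDr !addr0. Qed.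
Lemma brZl a x z : br (a *: x) z = a *: br x z.
Proof. by have := hL; rewrite /lie_bracket; case => h _ _ _; rewrite -[a *: x]addr0 h br0l addr0. Qed.
Lemma brZr a x z : br z (a *: x) = a *: br z x.
Proof. by have := hL; rewrite /lie_bracket; case => _ h _ _; rewrite -[a *: x]addr0 h br0r addr0. Qed.
Lemma brxx x : br x x = 0.
Proof. by have := hL; rewrite /lie_bracket; case. Qed.
Lemma brN x y : br x y = - br y x.
Proof.
apply/eqP; rewrite -addr_eq0; apply/eqP.
have := brxx (x + y); rewrite brDl !brDr !brxx add0r addr0 => <-.
by rewrite addrC.
Qed.
Lemma jacobi x y z : br x (br y z) + br y (br z x) + br z (br x y) = 0.
Proof. by have := hL; rewrite /lie_bracket; case. Qed.

Definition brl (z : L) := fun x => br x z.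
Definition brr (z : L) := fun x => br z x.
Lemma brl_lin z : linear (brl z).
Proof. by move=> a x y; rewrite /brl brDl brZl. Qed.
Lemma brr_lin z : linear (brr z).
Proof. by move=> a x y; rewrite /brr brDr brZr. Qed.
HB.instance Definition _ z := GRing.isLinear.Build F L L *:%R (brl z) (brl_lin z).
HB.instance Definition _ z := GRing.isLinear.Build F L L *:%R (brr z) (brr_lin z).

Lemma mem_brspace (U V : {vspace L}) u v : u \in U -> v \in V -> br u v \in brspace br U V.
Proof.
move=> uU vV; rewrite (coord_vbasis uU) (coord_vbasis vV).
have -> : forall s, br s (\sum_(i < \dim V) coord (vbasis V) i v *: (vbasis V)`_i)
   = brr s (\sum_(i < \dim V) coord (vbasis V) i v *: (vbasis V)`_i) by [].
rewrite linear_sum; apply: memv_suml => j _; rewrite linearZ /=; apply: memvZ.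
rewrite /brr.
have -> : forall s, br (\sum_(i < \dim U) coord (vbasis U) i u *: (vbasis U)`_i) s
   = brl s (\sum_(i < \dim U) coord (vbasis U) i u *: (vbasis U)`_i) by [].
rewrite linear_sum; apply: memv_suml => i _; rewrite linearZ /=; apply: memvZ.
apply: memv_span; apply: (allpairs_f (fun u v => br u v)); exact: memt_nth.
Qed.

Lemma brspace_sub (U V W : {vspace L}) : (forall u v, u \in U -> v \in V -> br u v \in W) ->
  (brspace br U V <= W)%VS.
Proof.
move=> H; apply/span_subvP => _ /allpairsP [[u v] /= [hu hv ->]].
by apply: H; exact: vbasis_mem.
Qed.

Lemma decomp (M : {vspace L}) w z : z \in (M + <[w]>)%VS ->
  exists m k, m \in M /\ z = m + k *: w.
Proof. by case/memv_addP => m mM [y /vlineP [k ->] ->]; exists m, k. Qed.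


Definition ad (m : L) : 'End(L) := linfun (brr m).
Definition adl (z : L) : 'End(L) := linfun (brl z).
Lemma brNr x z : br z (- x) = - br z x.
Proof. exact: (raddfN (brr z)). Qed.
Lemma brNl x z : br (- x) z = - br x z.
Proof. exact: (raddfN (brl z)). Qed.

Lemma adE m y : ad m y = br m y. Proof. by rewrite lfunE. Qed.
Lemma adlE z y : adl z y = br y z. Proof. by rewrite lfunE. Qed.

Lemma forward (M : {vspace L}) : maximal_subalgebra br M -> abelian_sub br M ->
  exists I : {vspace L}, [/\ ideal br I, abelian_sub br I &
                                (\dim I).+1 = \dim (fullv : {vspace L})%VS].
Proof.
case=> sM MnT Mmax abM.
have comm m m' y : m \in M -> m' \in M -> br m (br m' y) = br m' (br m y).
  move=> mM m'M; have := jacobi m m' y.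
  rewrite (abM _ _ mM m'M) br0r addr0 (brN y m) brNr.
  by move/eqP; rewrite subr_eq0 => /eqP.
pose stable (W : {vspace L}) := forall m y, m \in M -> y \in W -> br m y \in W.
have [W [stW WM minW]] : exists W, [/\ stable W, ~~ (W <= M)%VS &
    forall W', stable W' -> ~~ (W' <= M)%VS -> (W' <= W)%VS -> W' = W].
  suff : forall n W, (\dim W <= n)%N -> stable W -> ~~ (W <= M)%VS ->
      exists W, [/\ stable W, ~~ (W <= M)%VS &
      forall W', stable W' -> ~~ (W' <= M)%VS -> (W' <= W)%VS -> W' = W].
    move/(_ _ fullv (leqnn _)); apply; first by move=> m y _ _; exact: memvf.
    apply: contra MnT => fM; rewrite eqEdim subvf /=.
    exact: dimvS.
  elim=> [|n IH] W hn stW WM.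
  case: (classic (exists W', [/\ stable W', ~~ (W' <= M)%VS, (W' <= W)%VS & W' != W]))
      => [[W' [h1 h2 h3 h4]] | nex].
      have : (\dim W' < \dim W)%N.
        by move: h4; rewrite eqEdim h3 /= -ltnNge.
      by rewrite ltnNge (leq_trans hn).
    exists W; split => // W' h1 h2 h3; apply: NNPP => ne; apply: nex.
    by exists W'; split => //; apply/eqP.
  case: (classic (exists W', [/\ stable W', ~~ (W' <= M)%VS, (W' <= W)%VS & W' != W]))
      => [[W' [h1 h2 h3 h4]] | nex].
    apply: (IH W') => //.
    have : (\dim W' < \dim W)%N.
      by move: h4; rewrite eqEdim h3 /= -ltnNge.
    by move=> h; rewrite -ltnS (leq_trans h).
  exists W; split => // W' h1 h2 h3; apply: NNPP => ne; apply: nex.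
  by exists W'; split => //; apply/eqP.
have [w0 [w0W w0M]] : exists w0, w0 \in W /\ w0 \notin M.
  apply: NNPP => h; move/negP: WM; apply; apply/subvP => w wW.
  by apply/negPn/negP => wM; apply: h; exists w.
have W0 : W != 0%VS.
  by apply: contra WM => /eqP ->; exact: sub0v.
have K m : m \in M -> (exists a, forall w, w \in W -> br m w = a *: w) \/
                      (forall w, w \in W -> br m w \in M).
  move=> mM.
  have [a [v [vW v0 hv]]] := stable_eigvec (f := ad m) W0 (fun w wW => eq_ind_r (fun t => t \in W) (stW _ _ mM wW) (adE m w)).
  have {}hv : br m v = a *: v by rewrite -adE; exact: hv.
  pose Wa := (W :&: lker (ad m - a *: \1%VF))%VS.
  have memWa w : (w \in Wa) = (w \in W) && (br m w == a *: w).
    by rewrite memv_cap memv_ker !lfun_simp /= subr_eq0.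
  have stWa : stable Wa.
    move=> m' y m'M; rewrite !memWa => /andP [yW /eqP hy]; apply/andP; split.
      exact: stW.
    by rewrite comm // hy brZr.
  case: (boolP (Wa <= M)%VS) => WaM; last first.
    left; exists a => w wW.
    have : w \in Wa by rewrite (minW _ stWa WaM (capvSl _ _)).
    by rewrite memWa => /andP [_ /eqP].
  right.
  have a0 : a = 0.
    have : v \in Wa by rewrite memWa vW /= hv.
    move/(subvP WaM) => vM; move: hv; rewrite (abM _ _ mM vM) => /esym/eqP.
    by rewrite scaler_eq0 (negbTE v0) orbF => /eqP.
  pose Im := (ad m @: W)%VS.
  have stIm : stable Im.
    move=> m' y m'M /memv_imgP [w wW ->]; rewrite adE comm // -adE.
    by apply: memv_img; exact: stW.
  have ImW : (Im <= W)%VS.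
    by apply/subvP => _ /memv_imgP [w wW ->]; rewrite adE; exact: stW.
  case: (boolP (Im <= M)%VS) => ImM.
    by move=> w wW; apply: (subvP ImM); rewrite -adE; exact: memv_img.
  have eIm := minW _ stIm ImM ImW.
  have := limg_ker_dim (ad m) W; rewrite -/Im eIm -{2}[\dim W]add0n => /addIn.
  move/eqP; rewrite dimv_eq0 => /eqP h0.
  have hvk : v \in (W :&: lker (ad m))%VS by rewrite memv_cap vW memv_ker /= adE hv a0 scale0r eqxx.
  move: h0 => /eqP; rewrite -subv0 => /subvP /(_ _ hvk); by rewrite memv0 (negbTE v0).
pose S := (M + <[w0]>)%VS.
have MS : (M <= S)%VS by exact: addvSl.
have w0S : w0 \in S by apply: (subvP (addvSr _ _)); exact: memv_line.
have mw0S m : m \in M -> br m w0 \in S.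
  move=> mM; case: (K m mM) => [[a ha] | h].
    by rewrite ha // rpredZ.
  by apply: (subvP MS); exact: h.
have sS : subalgebra br S.
  move=> x y /decomp [m1 [k1 [m1M ->]]] /decomp [m2 [k2 [m2M ->]]].
  rewrite brDl !brDr !brZl !brZr (abM _ _ m1M m2M) (brN w0 m2) brxx.
  by rewrite !rpredD ?rpredZ ?rpredN ?rpred0 ?mw0S.
have SF : S = fullv.
  case: (Mmax S sS MS) => // SM.
  by move: w0S; rewrite SM (negbTE w0M).
have dec z : exists m k, m \in M /\ z = m + k *: w0.
  have : z \in S by rewrite SF memvf.
  exact: decomp.
have Mw0 : (M :&: <[w0]> = 0)%VS.
  apply/eqP; rewrite -subv0; apply/subvP => x /memv_capP [xM /vlineP [k xk]].
  rewrite memv0 xk; case: (eqVneq k 0) => [->|k0]; first by rewrite scale0r.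
  move: w0M; rewrite -(scalerK k0 w0) rpredZ //.
  by rewrite -xk.
case: (classic (forall m, m \in M -> br m w0 \in M)) => [hA | hB].
  exists M; split => //.
  - move=> x y xM; have [m [k [mM ->]]] := dec y.
    by rewrite brDl brZl (abM _ _ mM xM) add0r (brN w0 x) rpredZ // rpredN hA.
  - have w00 : w0 != 0 by apply: contra w0M => /eqP ->; rewrite rpred0.
    by rewrite -SF dimv_disjoint_sum // dim_vline w00 addn1.
have [m0 [m0M hm0]] : exists m0, m0 \in M /\ br m0 w0 \notin M.
  apply: NNPP => h; apply: hB => m mM; apply/negPn/negP => hn; apply: h.
  by exists m.
have [a ha] : exists a, forall w, w \in W -> br m0 w = a *: w.
  case: (K m0 m0M) => // h; by move: hm0; rewrite h.
have a0 : a != 0.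
  by apply: contra hm0 => /eqP a0; rewrite ha // a0 scale0r rpred0.
have WL : (W <= <[w0]>)%VS.
  apply/subvP => w wW; have [m [k [mM wE]]] := dec w.
  have mW : m \in W.
    have -> : m = w - k *: w0 by rewrite wE addrK.
    by rewrite rpredB ?rpredZ.
  have : br m0 m = a *: m by rewrite ha.
  rewrite (abM _ _ m0M mM) => /esym/eqP; rewrite scaler_eq0 (negbTE a0) /= => /eqP me0.
  by rewrite wE me0 add0r rpredZ // memv_line.
have hz z : br z w0 \in <[w0]>%VS.
  have [m [k [mM ->]]] := dec z.
  by rewrite brDl brZl brxx scaler0 addr0; apply: (subvP WL); apply: stW.
exists (lker (adl w0)).
have memI x : (x \in lker (adl w0)) = (br x w0 == 0) by rewrite memv_ker adlE.
split.
- move=> x y; rewrite !memI => /eqP xI.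
  have := jacobi y x w0; rewrite xI br0r add0r.
  have [k ->] : exists k, br w0 y = k *: w0.
    by apply/vlineP; rewrite brN rpredN.
  rewrite brZr xI scaler0 add0r => h.
  by rewrite brN h oppr0.
- move=> x y; rewrite !memI => /eqP xI /eqP yI.
  have [m1 [k1 [m1M xE]]] := dec x.
  have [m2 [k2 [m2M yE]]] := dec y.
  have hm1 : br m1 w0 = 0.
    by move: xI; rewrite xE brDl brZl brxx scaler0 addr0.
  rewrite xE brDl brZl (brN w0 y) yI oppr0 scaler0 addr0.
  by rewrite yE brDr brZr (abM _ _ m1M m2M) hm1 scaler0 addr0.
- have := limg_ker_dim (adl w0) fullv; rewrite capfv => <-.
  rewrite -addn1; congr (_ + _)%N.
  apply/eqP; rewrite eqn_leq; apply/andP; split; last first.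
    have : (adl w0 @: fullv <= <[w0]>)%VS.
      by apply/subvP => _ /memv_imgP [z _ ->]; rewrite adlE.
    move/dimvS; rewrite dim_vline => hle; exact: leq_trans hle (leq_b1 _).
  rewrite lt0n dimv_eq0; apply/negP => /eqP hh.
  have : adl w0 m0 \in (adl w0 @: fullv)%VS by apply: memv_img; exact: memvf.
  by rewrite hh memv0 adlE => /eqP hh'; move: hm0; rewrite hh' rpred0.
Qed.

Lemma derived_ideal : ideal br (derived br).
Proof. by move=> x y _; apply: mem_brspace; exact: memvf. Qed.

Lemma back1 (I : {vspace L}) : ideal br I -> abelian_sub br I ->
  (\dim I).+1 = \dim (fullv : {vspace L}) ->
  exists M : {vspace L}, maximal_subalgebra br M /\ abelian_sub br M.
Proof.
move=> hI abI hd; exists I; split => //; split.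
- by move=> x y xI yI; rewrite abI // rpred0.
- by apply/eqP => h; move/eqP: hd; rewrite h eqn_leq ltnn.
- move=> S _ IS.
  case: (leqP (\dim S) (\dim I)) => h.
    by left; apply/esym/eqP; rewrite eqEdim IS h.
  right; apply/eqP; rewrite eqEdim subvf /= -hd.
  exact: h.
Qed.

Lemma back2 : \dim (derived br) = 1%N -> frattini_ideal br 0%VS ->
  exists M : {vspace L}, maximal_subalgebra br M /\ abelian_sub br M.
Proof.
move=> hD [_ _ h3].
case: (classic (exists M, maximal_subalgebra br M /\ ~~ (derived br <= M)%VS))
   => [[M [mM DM]] | nex].
  exists M; split => // x y xM yM.
  have hc : br x y \in (M :&: derived br)%VS.
    case: mM => sM _ _; rewrite memv_cap sM //; apply: mem_brspace; exact: memvf.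
  have : ~~ (\dim (derived br) <= \dim (M :&: derived br))%N.
    apply: contra DM => hle.
    have /eqP <- : (M :&: derived br == derived br)%VS by rewrite eqEdim capvSr hle.
    exact: capvSl.
  rewrite hD -ltnNge ltnS leqn0 dimv_eq0 => /eqP h0.
  by move: hc; rewrite h0 memv0 => /eqP.
have : (derived br <= 0)%VS.
  apply: h3; first exact: derived_ideal.
  move=> M mM; apply/negPn/negP => DM; apply: nex; exists M; split => //.
by rewrite subv0 => /eqP h; move: hD; rewrite h dimv0.
Qed.

Lemma abelian_cs : abelian_sub br (derived br) -> completely_solvable br.
Proof.
move=> abD; exists 1%N => /=; apply/eqP; rewrite -subv0.
apply: brspace_sub => u v uD vD; by rewrite abD // rpred0.
Qed.

Lemma compsolv :
  ((exists I : {vspace L}, [/\ ideal br I, abelian_sub br I &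
                                (\dim I).+1 = \dim (fullv : {vspace L})%VS]) \/
    (\dim (derived br) = 1%N /\ frattini_ideal br 0%VS)) ->
   completely_solvable br.
Proof.
case => [[I [hI abI hd]] | [hD _]]; apply: abelian_cs.
  have [x [_ xI]] : exists x : L, x \in fullv /\ x \notin I.
    apply: NNPP => h.
    have : (fullv <= I)%VS.
      apply/subvP => x _; apply/negPn/negP => xI; apply: h; exists x; split => //.
      exact: memvf.
    by move/dimvS; rewrite -hd ltnn.
  have IxF : (I + <[x]>)%VS = fullv.
    apply/eqP; rewrite eqEdim subvf /= -hd.
    rewrite ltnNge; apply: contra xI => hle.
    have /eqP -> : (I == I + <[x]>)%VS by rewrite eqEdim addvSl hle.
    by apply: (subvP (addvSr _ _)); exact: memv_line.
  have DI : (derived br <= I)%VS.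
    apply: brspace_sub => u v _ _.
    have : u \in (I + <[x]>%VS)%VS by rewrite IxF memvf.
    case/decomp => i1 [a [i1I ->]].
    have : v \in (I + <[x]>)%VS by rewrite IxF memvf.
    case/decomp => i2 [b [i2I ->]].
    rewrite brDl !brDr !brZl !brZr (abI _ _ i1I i2I) brxx (brN i1 x).
    by rewrite !rpredD ?rpredZ ?rpredN ?rpred0 ?hI.
  by move=> u v uD vD; apply: abI; apply: (subvP DI).
set D := derived br in hD *.
have D0 : D != 0%VS by apply/eqP => h; move: hD; rewrite h dimv0.
set d := vpick D.
have dD : D = <[d]>%VS.
  apply/eqP; rewrite eq_sym eqEdim -memvE memv_pick hD dim_vline vpick0 D0.
  by [].
move=> u v; rewrite dD => /vlineP [a ->] /vlineP [b ->].
by rewrite brZl brZr brxx !scaler0.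
Qed.

End Basic.

Theorem proposition3p2 (F : closedFieldType) (L : vectType F)
  (br : L -> L -> L) (hL : lie_bracket br) :
  ((exists M : {vspace L}, maximal_subalgebra br M /\ abelian_sub br M) <->
   ((exists I : {vspace L}, [/\ ideal br I, abelian_sub br I &
                                (\dim I).+1 = \dim (fullv : {vspace L})%VS]) \/
    (\dim (derived br) = 1%N /\ frattini_ideal br 0%VS))) /\
  (((exists I : {vspace L}, [/\ ideal br I, abelian_sub br I &
                                (\dim I).+1 = \dim (fullv : {vspace L})%VS]) \/
    (\dim (derived br) = 1%N /\ frattini_ideal br 0%VS)) ->
   completely_solvable br).
Proof.
split; last exact: compsolv.
split.
  by case=> M [mM abM]; left; exact: forward hL _ mM abM.
case=> [[I [h1 h2 h3]] | [h1 h2]].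
  exact: back1 h1 h2 h3.
exact: back2 hL h1 h2.
Qed.
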